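(* Let $N\ge1$, $(\Psi_N)_{jk}=\binom{j}{k}$ for $0\le j,k<N$, $\Lambda_N=\mathrm{diag}(1,-1,\dots,(-1)^{N-1})$, and let $J_N$ be the symmetric tridiagonal matrix with $(J_N)_{kk}=k(2k^2+3k+2-N^2)$, $(J_N)_{k,k+1}=(J_N)_{k+1,k}=(k+1)(N^2-(k+1)^2)$. If $\vec v$ is an eigenvector of $J_N$ with eigenvalue $\lambda\neq(N^2-1)/2$, then $\vec v+\Psi_N\Lambda_N\vec v$ and $\vec v-\Psi_N\Lambda_N\vec v$ are nonzero eigenvectors of the binomial transform $\Psi_N\Lambda_N$ with eigenvalues $+1$ and $-1$ respectively. If $N$ is odd and $\vec v$ is an eigenvector of $J_N$ with eigenvalue $(N^2-1)/2$, then $\Psi_N\Lambda_N\vec v=\vec v$.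
   Context: Matrix indices start at $0$. *)

(* Defs.v *)
From HB Require Import structures.
From mathcomp Require Import all_boot all_order all_algebra.
Set Implicit Arguments. Unset Strict Implicit. Unset Printing Implicit Defensive.
Import Order.TTheory GRing.Theory Num.Theory.
Local Open Scope ring_scope.

Definition PsiN (R : nzRingType) (N : nat) : 'M[R]_N :=
  \matrix_(j < N, k < N) ('C(j, k))%:R.

Definition LambdaN (R : nzRingType) (N : nat) : 'M[R]_N :=
  \matrix_(j < N, k < N) (if j == k then (-1) ^+ j else 0).

Definition JN (R : nzRingType) (N : nat) : 'M[R]_N :=
  \matrix_(j < N, k < N)
    (if j == k then
       (j%:R) * (2 * (j%:R) ^+ 2 + 3 * j%:R + 2 - (N%:R) ^+ 2)
     else if (k == j.+1 :> nat) then
       (j.+1)%:R * ((N%:R) ^+ 2 - (j.+1)%:R ^+ 2)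
     else if (j == k.+1 :> nat) then
       (k.+1)%:R * ((N%:R) ^+ 2 - (k.+1)%:R ^+ 2)
     else 0).

Definition is_eigenvector (R : nzRingType) (N : nat) (A : 'M[R]_N)
  (v : 'cV[R]_N) (lam : R) : Prop :=
  v != 0 /\ A *m v = lam *: v.

(* Main.v *)
Require Import Defs.
From HB Require Import structures.
From mathcomp Require Import all_boot all_order all_algebra.
From mathcomp Require Import ring lra zify.
Set Implicit Arguments. Unset Strict Implicit. Unset Printing Implicit Defensive.
Import Order.TTheory GRing.Theory Num.Theory.
Local Open Scope ring_scope.


Definition ee {R : realFieldType} (N k : nat) : R := k%:R * (2 * (k%:R) ^+ 2 + 3 * k%:R + 2 - (N%:R) ^+ 2).
Definition dd {R : realFieldType} (N k : nat) : R := k%:R * ((N%:R) ^+ 2 - (k%:R) ^+ 2).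
Definition bb {R : realFieldType} (j l : nat) : R := ('C(j, l))%:R * (-1) ^+ l.

Lemma dd0 (R : realFieldType) N : dd N 0 = 0 :> R. Proof. by rewrite /dd mul0r. Qed.
Lemma ddN (R : realFieldType) N : dd N N = 0 :> R. Proof. by rewrite /dd subrr mulr0. Qed.

Lemma sum_ind (R : realFieldType) N a (F : nat -> R) :
  \sum_(k < N) (k == a :> nat)%:R * F k = if (a < N)%N then F a else 0.
Proof.
case: ltnP => h.
  rewrite (bigD1 (Ordinal h)) //= eqxx mul1r big1 ?addr0 // => k nk.
  suff -> : (k == a :> nat) = false by rewrite mul0r.
  by apply: negbTE.
rewrite big1 // => k _.
suff -> : (k == a :> nat) = false by rewrite mul0r.
by apply/negbTE; rewrite neq_ltn (leq_trans (ltn_ord k) h).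
Qed.

Lemma J_E (R : realFieldType) N (j k : 'I_N) : JN R N j k =
  (j == k :> nat)%:R * ee N j + (k == j.+1 :> nat)%:R * dd N j.+1
  + (j == k.+1 :> nat)%:R * dd N k.+1.
Proof.
rewrite mxE.
case: j k => j hj [k hk] /=.
have -> : (Ordinal hj == Ordinal hk) = (j == k) by [].
case: (eqVneq j k) => [<-|ne].
  have -> : (j == j.+1) = false by apply/negbTE; lia.
  by rewrite !mul0r !addr0 mul1r.
case: (eqVneq k j.+1) => [->|ne2].
  have -> : (j == j.+2) = false by apply/negbTE; lia.
  by rewrite !mul0r mul1r add0r addr0.
case: (eqVneq j k.+1) => [->|ne3].
  by rewrite !mulr0n !mul0r !add0r mul1r.
by rewrite !mulr0n !mul0r !addr0.
Qed.

Lemma B_E (R : realFieldType) n (k l : 'I_n) : (PsiN R n *m LambdaN R n) k l = bb k l.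
Proof.
rewrite !mxE (bigD1 l) //= !mxE eqxx big1 ?addr0 // => m nm.
by rewrite !mxE (negbTE nm) mulr0.
Qed.

Lemma JM_E (R : realFieldType) n p (M : 'M[R]_(n.+1, p)) (j : 'I_n.+1) q :
  (JN R n.+1 *m M) j q = ee n.+1 j * M (inord j) q
    + dd n.+1 j.+1 * M (inord j.+1) q + dd n.+1 j * M (inord j.-1) q.
Proof.
rewrite mxE.
under eq_bigr => k _ do rewrite J_E -[k in M k q]inord_val !mulrDl.
rewrite !big_split /=.
congr (_ + _ + _).
- under eq_bigr => k _ do rewrite eq_sym -mulrA.
  by rewrite (sum_ind _ _ (fun k => ee n.+1 j * M (inord k) q)) ltn_ord.
- under eq_bigr => k _ do rewrite -mulrA.
  rewrite (sum_ind _ _ (fun k => dd n.+1 j.+1 * M (inord k) q)); case: ifP => // h.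
  have -> : j.+1 = n.+1 by have := ltn_ord j; lia.
  by rewrite ddN mul0r.
- case: j => [[|j] hj] /=.
    rewrite dd0 mul0r; apply: big1 => k _; by rewrite !mul0r.
  under eq_bigr => k _ do rewrite eqSS eq_sym -mulrA.
  by rewrite (sum_ind _ _ (fun k => dd n.+1 k.+1 * M (inord k) q)) (ltnW hj).
Qed.

Lemma MJ_E (R : realFieldType) n p (M : 'M[R]_(p, n.+1)) q (l : 'I_n.+1) :
  (M *m JN R n.+1) q l = ee n.+1 l * M q (inord l)
    + dd n.+1 l * M q (inord l.-1) + dd n.+1 l.+1 * M q (inord l.+1).
Proof.
rewrite mxE.
under eq_bigr => k _ do rewrite J_E -[k in M q k]inord_val !mulrDr.
rewrite !big_split /=.
congr (_ + _ + _).
- under eq_bigr => k _ do rewrite mulrCA.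
  by rewrite (sum_ind _ _ (fun k => M q (inord k) * ee n.+1 k)) ltn_ord mulrC.
- case: l => [[|l] hl] /=.
    rewrite dd0 mul0r; apply: big1 => k _; by rewrite ?mul0r ?mulr0.
  under eq_bigr => k _ do rewrite eq_sym eqSS mulrCA.
  by rewrite (sum_ind _ _ (fun k => M q (inord k) * dd n.+1 k.+1)) (ltnW hl) mulrC.
- under eq_bigr => k _ do rewrite mulrCA.
  rewrite (sum_ind _ _ (fun k => M q (inord k) * dd n.+1 l.+1)); case: ifP => [_|h]; first by rewrite mulrC.
  have -> : l.+1 = n.+1 by have := ltn_ord l; lia.
  by rewrite ddN mul0r.
Qed.


Lemma key (R : realFieldType) N j l :
  ee N j * bb j l + dd N j.+1 * bb j.+1 l + dd N j * bb j.-1 l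
  + (ee N l * bb j l + dd N l * bb j l.-1 + dd N l.+1 * bb j l.+1)
  = ((N%:R) ^+ 2 - 1 : R) * bb j l.
Proof.
rewrite /bb.
case: (ltnP j.+1 l) => h1.
  rewrite !bin_small; try lia.
  by rewrite !mul0r !mulr0 !addr0.
case: (eqVneq l j.+1) => [->|h2].
  rewrite /= !binn !bin_small; try lia.
  rewrite exprS; ring.
have hl : (l <= j)%N by move/eqP: h2; lia.
case: l => [|l] in h1 h2 hl *.
  rewrite /= !bin0 bin1 expr0 expr1 /ee /dd; ring.
have hlR : l.+1%:R <= j%:R :> R by rewrite ler_nat.
have hl0 : 0 <= l%:R :> R by rewrite ler0n.
set c := ('C(j, l.+1))%:R : R.
have Hx : (j.+1%:R - l.+1%:R) * ('C(j.+1, l.+1))%:R = j.+1%:R * c :> R.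
  by rewrite -natrB ?(ltnW h1) // -!natrM mul_bin_down.
have Hw : j%:R * ('C(j.-1, l.+1))%:R = (j%:R - l.+1%:R) * c :> R.
  by rewrite -natrB // -!natrM mul_bin_down.
have Hz : (l.+2%:R) * ('C(j, l.+2))%:R = (j%:R - l.+1%:R) * c :> R.
  by rewrite -natrB // -!natrM mul_bin_left.
have Hy : (l.+1%:R) * c = (j%:R - l%:R) * ('C(j, l))%:R :> R.
  by rewrite -natrB ?(ltnW hl) // -!natrM mul_bin_left.
have Ex : ('C(j.+1, l.+1))%:R = j.+1%:R * c / (j.+1%:R - l.+1%:R) :> R.
  rewrite -Hx; field; apply: lt0r_neq0; lra.
have Ez : ('C(j, l.+2))%:R = (j%:R - l.+1%:R) * c / l.+2%:R :> R.
  rewrite -Hz; field; apply: lt0r_neq0; lra.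
have Ey : ('C(j, l))%:R = l.+1%:R * c / (j%:R - l%:R) :> R.
  rewrite Hy; field; apply: lt0r_neq0; lra.
have Ew : dd N j * (('C(j.-1, l.+1))%:R * (-1) ^+ l.+1)
   = ((N%:R)^+2 - (j%:R)^+2) * ((j%:R - l.+1%:R) * c) * (-1) ^+ l.+1.
  rewrite [LHS]mulrA; congr (_ * _); rewrite -Hw /dd; ring.
rewrite Ew /= Ex Ez Ey !exprS.
rewrite /ee /dd; field.
have hlR2 : l%:R < j%:R :> R by rewrite ltr_nat.
apply/andP; split; apply: lt0r_neq0; lra.
Qed.



Lemma coef1X (R : realFieldType) k l : ((1 - 'X) ^+ k : {poly R})`_l = bb k l.
Proof.
elim: k l => [|k IH] l.
  rewrite expr0 coef1 /bb bin0n; case: l => [|l] /=.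
    by rewrite expr0 mulr1.
  by rewrite mul0r.
rewrite exprSr mulrBr mulr1 coefB coefMX !IH /bb.
case: l => [|l] /=.
  by rewrite subr0 !bin0.
rewrite binS natrD !exprS; ring.
Qed.

Lemma BB (R : realFieldType) n : (PsiN R n *m LambdaN R n) *m (PsiN R n *m LambdaN R n) = 1%:M.
Proof.
apply/matrixP => j l.
rewrite mxE.
under eq_bigr => k _ do rewrite !B_E -!coef1X -coefZ.
rewrite -coef_sum.
set p : {poly R} := (1 - 'X) ^+ j.
have hs : (size p <= n)%N.
  apply/leq_sizeP => i hi; rewrite coef1X /bb bin_small ?mul0r //.
  by have := ltn_ord j; lia.
have E : \sum_(k < n) p`_k *: (1 - 'X) ^+ k = p \Po (1 - 'X).
  rewrite comp_polyE (big_ord_widen n (fun i => p`_i *: (1 - 'X) ^+ i) hs).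
  rewrite [RHS]big_mkcond /=; apply: eq_bigr => i _.
  case: ifP => // h; rewrite nth_default ?scale0r //; lia.
rewrite E /p rmorphXn /= rmorphB /= comp_polyX rmorph1 opprB addrC subrK coefXn.
by rewrite mxE eq_sym.
Qed.


Lemma comm (R : realFieldType) n : let B := PsiN R n.+1 *m LambdaN R n.+1 in
  JN R n.+1 *m B + B *m JN R n.+1 = (((n.+1)%:R) ^+ 2 - 1) *: B.
Proof.
move=> B; apply/matrixP => i l.
rewrite [LHS]mxE JM_E MJ_E [RHS]mxE /B.
have Bi1 (k : nat) (m : 'I_n.+1) : (k < n.+1)%N ->
    (PsiN R n.+1 *m LambdaN R n.+1) (inord k) m = bb k m.
  by move=> h; rewrite B_E inordK.
have Bi2 (k : nat) (m : 'I_n.+1) : (k < n.+1)%N ->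
    (PsiN R n.+1 *m LambdaN R n.+1) m (inord k) = bb m k.
  by move=> h; rewrite B_E inordK.
have hi := ltn_ord i; have hl := ltn_ord l.
rewrite Bi1 // Bi2 // (Bi1 i.-1) ?(Bi2 l.-1); try lia.
have -> : dd n.+1 i.+1 * (PsiN R n.+1 *m LambdaN R n.+1) (inord i.+1) l
    = dd n.+1 i.+1 * bb i.+1 l.
  case: (ltnP i.+1 n.+1) => h; first by rewrite Bi1.
  have -> : i.+1 = n.+1 by lia.
  by rewrite ddN !mul0r.
have -> : dd n.+1 l.+1 * (PsiN R n.+1 *m LambdaN R n.+1) i (inord l.+1)
    = dd n.+1 l.+1 * bb i l.+1.
  case: (ltnP l.+1 n.+1) => h; first by rewrite Bi2.
  have -> : l.+1 = n.+1 by lia.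
  by rewrite ddN !mul0r.
by rewrite key B_E.
Qed.

Lemma L0 (R : realFieldType) n (w : 'cV[R]_n.+1) lam :
  JN R n.+1 *m w = lam *: w -> w (inord 0) 0 = 0 -> w = 0.
Proof.
move=> Hw H0.
have H : forall i, (i <= n)%N -> forall k, (k <= i)%N -> w (inord k) 0 = 0.
  elim => [|i IH] hi k hk.
    by have -> : k = 0%N by lia.
  case: (ltnP k i.+1) => hk2; first by apply: IH; lia.
  have -> : k = i.+1 by lia.
  have := congr1 (fun M : 'cV[R]_n.+1 => M (inord i) 0) Hw.
  rewrite JM_E [RHS]mxE inordK; last by lia.
  rewrite (IH (ltnW hi) i (leqnn i)) (IH (ltnW hi) i.-1 (leq_pred i)).
  rewrite !mulr0 addr0 add0r => /eqP; rewrite mulf_eq0 => /orP [|/eqP //].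
  rewrite /dd mulf_eq0 pnatr_eq0 /= subr_eq0 -!natrX eqr_nat eqn_exp2r //.
  move/eqP; lia.
apply/matrixP => k c; rewrite (ord1 c) mxE -[k]inord_val; apply: (H n) => //.
by have := ltn_ord k; lia.
Qed.


Unset Implicit Arguments.
Theorem mainTheorem12 (R : realFieldType) (N : nat) (hN : (1 <= N)%N) :
  (forall (v : 'cV[R]_N) (lam : R),
     is_eigenvector (JN R N) v lam ->
     lam != ((N%:R) ^+ 2 - 1) / 2 ->
     is_eigenvector (PsiN R N *m LambdaN R N)
       (v + (PsiN R N *m LambdaN R N) *m v) 1 /\
     is_eigenvector (PsiN R N *m LambdaN R N)
       (v - (PsiN R N *m LambdaN R N) *m v) (-1)) /\
  (odd N ->
   forall v : 'cV[R]_N,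
     is_eigenvector (JN R N) v (((N%:R) ^+ 2 - 1) / 2) ->
     (PsiN R N *m LambdaN R N) *m v = v).
Proof.
case: N hN => [//|n] _.
have BB' := BB R n.+1.
have C := comm R n.
set B := PsiN R n.+1 *m LambdaN R n.+1 in BB' C *.
set J := JN R n.+1 in C *.
set M := ((n.+1)%:R ^+ 2 - 1 : R) in C *.
have JB (v : 'cV[R]_n.+1) lam : J *m v = lam *: v ->
    J *m (B *m v) = (M - lam) *: (B *m v).
  move=> Hv.
  have E : J *m B = M *: B - B *m J by rewrite -C addrK.
  rewrite mulmxA E mulmxBl -scalemxAl.
  by rewrite -(mulmxA B) Hv -scalemxAr [RHS]scalerBl.
have BBv (v : 'cV[R]_n.+1) : B *m (B *m v) = v by rewrite mulmxA BB' mul1mx.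
split.
  move=> v lam [vnz Hv] hlam.
  have ctr : lam *: v != (M - lam) *: v.
    apply/negP => /eqP h; move: h => /eqP.
    rewrite -subr_eq0 -scalerBl scaler_eq0 (negbTE vnz) orbF => /eqP h.
    by case/negP: hlam; apply/eqP; lra.
  split; split.
  - apply/negP => /eqP H.
    have Bv : B *m v = - v by apply/eqP; rewrite -addr_eq0 addrC H.
    move: (JB v lam Hv); rewrite Bv mulmxN Hv !scalerN => /oppr_inj h.
    by rewrite h eqxx in ctr.
  - by rewrite mulmxDr BBv scale1r addrC.
  - apply/negP => /eqP H.
    have Bv : B *m v = v by apply/eqP; rewrite eq_sym -subr_eq0 H.
    move: (JB v lam Hv); rewrite Bv Hv => h.
    by rewrite h eqxx in ctr.
  - by rewrite mulmxBr BBv scaleN1r opprB.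
move=> _ v [vnz Hv].
set w := B *m v - v.
have Hw : J *m w = ((n.+1)%:R ^+ 2 - 1) / 2 *: w.
  rewrite /w mulmxBr (JB _ _ Hv) Hv scalerBr; congr (_ *: _ - _).
  by rewrite /M; field.
have w0 : w (inord 0) 0 = 0.
  rewrite /w /B !mxE.
  under eq_bigr => k _ do rewrite B_E inordK // /bb bin0n.
  rewrite (eq_bigr (fun k : 'I_n.+1 => (k == 0 :> nat)%:R * ((-1) ^+ k * v (inord k) 0))).
    by rewrite (sum_ind _ _ (fun k => (-1) ^+ k * v (inord k) 0)) // expr0 mul1r subrr.
  by move=> k _; rewrite inord_val mulrA.
apply/eqP; rewrite -subr_eq0; apply/eqP.
exact: (L0 Hw w0).
Qed.
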